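(* Let $m\ge 1$ be a fixed integer. Let $(r_t)_{t\in\mathbb{Z}}$ be a real-valued process with $r_t=\sigma\epsilon_t$, where $\sigma>0$ is a constant and $(\epsilon_t)$ is a random process. Let $a_t=1$ if $r_t\neq 0$ and $a_t=0$ if $r_t=0$. Assume $E(\epsilon_t\mid a_t=1)=0$, $E(\epsilon_t^2\mid a_t=1)=1$, and that $P(a_ta_{t-h}=1)>0$ for $h=0,1,\dots,m$. Suppose that $(r_t)$ is strictly stationary and ergodic, with $E(r_t^2)<\infty$ and $E(r_t)=0$. Given observations $r_1,\dots,r_n$, define for $h=0,1,\dots,m$ $$\hat{\gamma}_0(h)=\frac1n\sum_{t=1+h}^n r_tr_{t-h},\quad \hat\rho_0(h)=\frac{\hat\gamma_0(h)}{\hat\gamma_0(0)},\quad \hat{\gamma}_a(h)=\frac1n\sum_{t=h+1}^n a_ta_{t-h},$$ and $\widehat{\Gamma}_{pr}(m)=(\hat\rho_{pr}(1),\dots,\hat\rho_{pr}(m))'$ with $\hat\rho_{pr}(h)=\hat\rho_0(h)\,\hat\gamma_a(0)/\hat\gamma_a(h)$. Let $\rho_\epsilon(h)=E(\epsilon_t\epsilon_{t-h}\mid a_ta_{t-h}=1)$ (which does not depend on $t$) and $\Gamma_\epsilon(m)=(\rho_\epsilon(1),\dots,\rho_\epsilon(m))'$. Then $\widehat{\Gamma}_{pr}(m)\to\Gamma_\epsilon(m)$ almost surely as $n\to\infty$.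
   Context: $a_t$ indicates a nonzero return (a price change) at date $t$. The quantities $\rho_\epsilon(h)$ are the serial correlations of the price changes. *)

(* Defs.v *)
From HB Require Import structures.
From mathcomp Require Import all_boot all_order all_algebra.
From mathcomp Require Import all_classical all_reals all_analysis.
Set Implicit Arguments. Unset Strict Implicit. Unset Printing Implicit Defensive.
Import Order.TTheory GRing.Theory Num.Theory.
Import numFieldNormedType.Exports.
Local Open Scope classical_set_scope.
Local Open Scope ring_scope.

Section Defs.
Context {R : realType}.

Definition cylinders : set (set (int -> R)) :=
  [set C | exists (t : int) (A : set R), measurable A /\ C = [set x | A (x t)]].

Definition prod_measurable (B : set (int -> R)) : Prop := <<s cylinders>> B.

Definition shift (x : int -> R) : int -> R := fun t => x (t + 1).

Context {d : measure_display} {T : measurableType d}.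

Definition path_event (X : int -> T -> R) (B : set (int -> R)) : set T :=
  [set w | B (fun t => X t w)].

Definition strictly_stationary (P : probability T R) (X : int -> T -> R) :=
  forall B, prod_measurable B ->
    P (path_event X B) = P (path_event X [set x | B (shift x)]).

Definition ergodic (P : probability T R) (X : int -> T -> R) :=
  forall B, prod_measurable B -> [set x | B (shift x)] = B ->
    P (path_event X B) = 0%E \/ P (path_event X B) = 1%E.

(* elementary conditional expectation given an event A with P A > 0 *)
Definition cond_exp (P : probability T R) (X : T -> R) (A : set T) : R :=
  fine (\int[P]_(w in A) (X w)%:E) / fine (P A).

Definition ind_nz (X : int -> T -> R) (t : int) (w : T) : R :=
  if X t w != 0 then 1 else 0.

Definition gamma0_hat (X : int -> T -> R) (n h : nat) (w : T) : R :=
  n%:R^-1 * \sum_(h.+1 <= t < n.+1) X t%:Z w * X (t%:Z - h%:Z) w.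

Definition rho0_hat (X : int -> T -> R) (n h : nat) (w : T) : R :=
  gamma0_hat X n h w / gamma0_hat X n 0 w.

Definition gammaa_hat (X : int -> T -> R) (n h : nat) (w : T) : R :=
  n%:R^-1 * \sum_(h.+1 <= t < n.+1) ind_nz X t%:Z w * ind_nz X (t%:Z - h%:Z) w.

Definition rhopr_hat (X : int -> T -> R) (n h : nat) (w : T) : R :=
  rho0_hat X n h w * gammaa_hat X n 0 w / gammaa_hat X n h w.

End Defs.

(* Main.v *)
Require Import Defs.
From HB Require Import structures.
From mathcomp Require Import all_boot all_order all_algebra.
From mathcomp Require Import all_classical all_reals all_analysis.
From mathcomp Require Import measurable_realfun.
From mathcomp Require Import ring lra.
Import Order.TTheory GRing.Theory Num.Theory.
Import numFieldNormedType.Exports.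
Local Open Scope classical_set_scope.
Local Open Scope ring_scope.
Set Implicit Arguments. Unset Strict Implicit. Unset Printing Implicit Defensive.
Section Birkhoff.
Context d (Om : measurableType d) (R : realType) (mu : probability Om R) (S : Om -> Om).
Hypothesis mS : measurable_fun setT S.
Hypothesis Sinv : forall B, measurable B -> mu (S @^-1` B) = mu B.

Definition intg (f : Om -> R) := mu.-integrable setT (EFin \o f).
Definition Ex (f : Om -> R) := Rintegral mu setT f.

Lemma intg_meas f : intg f -> measurable_fun setT f.
Proof. by move=> /integrableP[/measurable_EFinP]. Qed.

Lemma comp_intg f : intg f -> intg (f \o S) /\ Ex (f \o S) = Ex f.
Proof.
move=> fi; have mf := intg_meas fi.
have eqm (g : Om -> \bar R) : (\int[mu]_x g x = \int[pushforward mu S]_x g x)%E.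
  by apply: eq_measure_integral => A mA _; exact/esym/Sinv.
have mEf : measurable_fun setT (EFin \o f : Om -> \bar R) by apply/measurable_EFinP.
have fiS : intg (f \o S).
  apply/integrableP; split.
    by apply/measurable_EFinP; apply: measurableT_comp.
  move/integrableP: fi => [_]; rewrite eqm.
  rewrite ge0_integral_pushforward //.
  by apply: measurableT_comp => //; exact: measurable_realfun.abse_measurable.
split => //; rewrite /Ex /Rintegral [in RHS]eqm integral_pushforward //.
Qed.

Lemma miter k : measurable_fun setT (iter k S).
Proof.
elim: k => [|k IH] /=; first exact: measurable_id.
exact: measurableT_comp.
Qed.

Lemma iter_intg f k : intg f -> intg (f \o iter k S) /\ Ex (f \o iter k S) = Ex f.
Proof.
move=> fi; elim: k => [|k [IH1 IH2]]; first by [].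
have -> : f \o iter k.+1 S = (f \o iter k S) \o S.
  by apply/funext => x; rewrite /comp iterSr.
have [h1 h2] := comp_intg IH1; split => //; by rewrite h2.
Qed.

Lemma intgD f g : intg f -> intg g -> intg (fun x => f x + g x).
Proof. by move=> fi gi; exact: (integrableD _ fi gi). Qed.

Lemma intgN f : intg f -> intg (fun x => - f x).
Proof. by move=> fi; exact: (integrableN fi). Qed.

Lemma intgB f g : intg f -> intg g -> intg (fun x => f x - g x).
Proof. by move=> fi gi; apply: intgD => //; exact: intgN. Qed.

Lemma intg_cst c : intg (fun _ => c).
Proof. exact: finite_measure_integrable_cst. Qed.

Lemma intg_le (f g : Om -> R) : measurable_fun setT f -> intg g -> (forall x, `|f x| <= g x) -> intg f.
Proof.
move=> mf gi fg; apply: (le_integrable measurableT _ _ gi).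
  exact/measurable_EFinP.
move=> x _ /=; rewrite lee_fin (le_trans (fg x)) //.
by rewrite real_ler_norm // ger0_real // (le_trans _ (fg x)).
Qed.

Lemma intg_abs f : intg f -> intg (fun x => `|f x|).
Proof.
move=> fi; have := integrable_abse fi.
by apply: eq_integrable => // x _.
Qed.

Lemma ExD f g : intg f -> intg g -> Ex (fun x => f x + g x) = Ex f + Ex g.
Proof. by move=> fi gi; rewrite /Ex RintegralD. Qed.

Lemma ExB f g : intg f -> intg g -> Ex (fun x => f x - g x) = Ex f - Ex g.
Proof. by move=> fi gi; rewrite /Ex RintegralB. Qed.

Lemma Ex_le f g : intg f -> intg g -> (forall x, f x <= g x) -> Ex f <= Ex g.
Proof. by move=> fi gi fg; rewrite /Ex le_Rintegral. Qed.

Lemma Ex_cst c : Ex (fun _ => c) = c.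
Proof.
rewrite /Ex Rintegral_cst // -[RHS]mulr1; congr (_ * _).
exact: (congr1 fine (probability_setT mu)).
Qed.

Definition Sn (f : Om -> R) n x := \sum_(0 <= k < n) f (iter k S x).

Lemma Sn0 f x : Sn f 0 x = 0.
Proof. by rewrite /Sn big_geq. Qed.

Lemma SnS f n x : Sn f n.+1 x = f x + Sn f n (S x).
Proof.
rewrite /Sn big_nat_recl //; congr (_ + _).
by apply: eq_bigr => i _; rewrite iterSr.
Qed.

Lemma SnSr f n x : Sn f n.+1 x = Sn f n x + f (iter n S x).
Proof. by rewrite /Sn big_nat_recr. Qed.

Lemma Sn_meas (f : Om -> R) n : measurable_fun setT f -> measurable_fun setT (Sn f n).
Proof.
move=> mf; apply: measurable_sum => k.
exact: measurableT_comp mf (miter k).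
Qed.

Lemma Sn_intg f n : intg f -> intg (Sn f n).
Proof.
move=> fi; elim: n => [|n IH].
  by rewrite (_ : Sn f 0 = fun _ => 0); [exact: intg_cst|apply/funext => x; exact: Sn0].
rewrite (_ : Sn f n.+1 = fun x => Sn f n x + (f \o iter n S) x).
  by apply: intgD => //; have [] := iter_intg n fi.
by apply/funext => x; rewrite SnSr.
Qed.

Lemma Sn_le_abs f n k x : (k <= n)%N -> Sn f k x <= Sn (fun y => `|f y|) n x.
Proof.
move=> kn; elim: n kn => [|n IH]; first by rewrite leqn0 => /eqP ->; rewrite !Sn0.
rewrite leq_eqVlt => /orP[/eqP ->|kn].
  by rewrite /Sn; apply: ler_sum => i _; exact: ler_norm.
rewrite SnSr (le_trans (IH kn)) // lerDl //.
Qed.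

Fixpoint Mx (g : Om -> R) n x := match n with
  | 0 => 0 | n'.+1 => Num.max (Mx g n' x) (Sn g n x) end.

Lemma Mx_ge0 g n x : 0 <= Mx g n x.
Proof. by elim: n => [|n IH] //=; rewrite le_max IH. Qed.

Lemma Mx_ub g n k x : (k <= n)%N -> Sn g k x <= Mx g n x.
Proof.
elim: n => [|n IH]; first by rewrite leqn0 => /eqP ->; rewrite Sn0.
rewrite leq_eqVlt => /orP[/eqP ->|kn] /=; first by rewrite le_max lexx orbT.
by rewrite le_max IH.
Qed.

Lemma Mx_lub g n x c : 0 <= c -> (forall k, (k <= n)%N -> Sn g k x <= c) -> Mx g n x <= c.
Proof.
move=> c0; elim: n => [|n IH] h //=.
by rewrite ge_max IH ?h // => k kn; apply: h; exact: leqW.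
Qed.

Lemma Mx_le g n x : Mx g n x <= Sn (fun y => `|g y|) n x.
Proof.
apply: Mx_lub => [|k kn]; first by rewrite /Sn sumr_ge0.
exact: Sn_le_abs.
Qed.

Lemma Mx_meas (g : Om -> R) n : measurable_fun setT g -> measurable_fun setT (Mx g n).
Proof.
move=> mg; elim: n => [|n IH] /=; first exact: measurable_cst.
by apply: measurable_maxr => //; exact: Sn_meas.
Qed.

Lemma Mx_mono g n x : Mx g n x <= Mx g n.+1 x.
Proof. by rewrite /= le_max lexx. Qed.

Lemma Mx_intg g n : intg g -> intg (Mx g n).
Proof.
move=> gi; apply: (intg_le (Mx_meas n (intg_meas gi))).
  exact: (Sn_intg n (intg_abs gi)).
by move=> x; rewrite ger0_norm ?Mx_ge0 ?Mx_le.
Qed.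

Lemma mlt (h : Om -> R) c : measurable_fun setT h -> measurable [set x | c < h x].
Proof.
move=> mh; have := mh measurableT `]c, +oo[%classic (measurable_itv _).
by rewrite setTI preimage_itvoy.
Qed.

Definition Bset g n := [set x | 0 < Mx g n x].

Lemma Bset_meas g n : measurable_fun setT g -> measurable (Bset g n).
Proof. by move=> mg; apply: mlt; exact: Mx_meas. Qed.

Lemma intg_ind g (B : set Om) : intg g -> measurable B -> intg (fun x => g x * \1_B x).
Proof.
move=> gi mB; apply: (intg_le _ (intg_abs gi)).
  by apply: measurable_funM; [exact: intg_meas|exact: measurable_indic].
move=> x; rewrite normrM indicE; case: (_ \in _) => /=.
  by rewrite normr1 mulr1.
by rewrite normr0 mulr0.
Qed.

Lemma garsia g n : intg g -> 0 <= Ex (fun x => g x * \1_(Bset g n) x).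
Proof.
move=> gi; have mg := intg_meas gi.
have key x : Mx g n x - Mx g n (S x) <= g x * \1_(Bset g n) x.
  rewrite indicE; case: (boolP (x \in Bset g n)) => [/set_mem|xn]; rewrite /Bset /=.
  - move=> xin; rewrite mulr1 lerBlDr.
    have : Mx g n x <= Num.max 0 (g x + Mx g n (S x)).
      apply: Mx_lub => [|[|k] kn]; first by rewrite le_max lexx.
        by rewrite Sn0 le_max lexx.
      rewrite SnS le_max; apply/orP; right; rewrite lerD2l.
      by apply: Mx_ub; exact: ltnW.
    rewrite le_max => /orP[|//]; by rewrite leNgt xin.
  - have xle : Mx g n x <= 0.
      by rewrite leNgt; apply/negP => h; move/negP: xn; apply; exact/mem_set.
    rewrite mulr0 subr_le0 (le_trans xle) //; exact: Mx_ge0.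
have Mi := Mx_intg n gi.
have [MSi MSE] := comp_intg Mi.
apply: le_trans (Ex_le (intgB Mi MSi) (intg_ind gi (Bset_meas n mg)) key).
by rewrite ExB // MSE subrr.
Qed.

Lemma big_enough (C dl : R) : 0 < dl -> exists M, forall n, (M <= n)%N -> C <= n%:R * dl.
Proof.
move=> dl0; exists (Num.Def.archi_bound `|C / dl|) => n Mn.
rewrite -ler_pdivrMr //; apply: (le_trans (ler_norm _)).
apply: ltW; apply: (lt_le_trans (archi_boundP (normr_ge0 _))).
by rewrite ler_nat.
Qed.

Definition qq (a : R) k := a + (k.+1%:R)^-1.

Lemma qq_lt a k : qq a k.+1 < qq a k.
Proof. by rewrite /qq ltrD2l ltf_pV2 ?posrE ?ltr_nat. Qed.

Lemma qq_gt a k : a < qq a k.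
Proof. by rewrite /qq ltrDl invr_gt0 ltr0n. Qed.

Definition Eset f a := [set x | exists k, forall N, exists2 n, (N <= n)%N &
  n.+1%:R * qq a k < Sn f n.+1 x].

Lemma Eset_inv f a : S @^-1` Eset f a = Eset f a.
Proof.
apply/seteqP; split => x /= [k Hk]; exists k.+1 => N.
- have dl0 : 0 < qq a k - qq a k.+1 by rewrite subr_gt0 qq_lt.
  have [M HM] := big_enough (qq a k.+1 - f x) dl0.
  have [n nN H] := Hk (maxn N M); exists n.+1.
    by apply: leqW; apply: leq_trans nN; exact: leq_maxl.
  have := HM n.+1 (leqW (leq_trans (leq_maxr N M) nN)).
  rewrite SnS (_ : n.+2%:R = n.+1%:R + 1); last by rewrite -natr1.
  rewrite mulrDl mul1r.
  move: H; set s := Sn f n.+1 (S x); set nn := n.+1%:R.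
  rewrite mulrBr; lra.
- have dl0 : 0 < qq a k - qq a k.+1 by rewrite subr_gt0 qq_lt.
  have [M HM] := big_enough (f x - qq a k) dl0.
  have [[|n] nN H] := Hk (maxn N.+1 M).
    by move: nN; rewrite geq_max ltn0.
  exists n; first by move: nN; rewrite geq_max ltnS => /andP[].
  have := HM n.+1 (leq_trans (leq_maxr N.+1 M) nN).
  move: H; rewrite SnS (_ : n.+2%:R = n.+1%:R + 1); last by rewrite -natr1.
  rewrite mulrDl mul1r.
  set s := Sn f n.+1 (S x); set nn := n.+1%:R.
  rewrite mulrBr; lra.
Qed.

Lemma Eset_meas f a : measurable_fun setT f -> measurable (Eset f a).
Proof.
move=> mf.
have -> : Eset f a = \bigcup_k \bigcap_N \bigcup_n
   (if (N <= n)%N then [set x | n.+1%:R * qq a k < Sn f n.+1 x] else set0).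
  apply/seteqP; split => x /=.
    move=> [k Hk]; exists k => // N _; have [n nN H] := Hk N.
    by exists n => //; rewrite nN.
  move=> [k _ Hk]; exists k => N; have [n _] := Hk N I.
  by case: ifPn => // nN H; exists n.
apply: bigcupT_measurable => k; apply: bigcapT_measurable => N.
apply: bigcupT_measurable => n; case: ifPn => _ //.
by apply: mlt; exact: Sn_meas.
Qed.

Lemma Sn_subc f a m x : Sn (fun y => f y - a) m x = Sn f m x - m%:R * a.
Proof.
rewrite /Sn sumrB; congr (_ - _).
by rewrite sumr_const_nat subn0 mulr_natl.
Qed.

Hypothesis erg : forall B, measurable B -> S @^-1` B = B -> mu B = 0%E \/ mu B = 1%E.

Lemma Eset_null f a : intg f -> Ex f < a -> mu (Eset f a) = 0%E.
Proof.
move=> fi fa; have mf := intg_meas fi; have mE := Eset_meas a mf.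
case: (erg mE (Eset_inv f a)) => // E1; exfalso.
pose g := fun x => f x - a.
have gi : intg g := intgB fi (intg_cst a).
have mg := intg_meas gi.
have Eg : Ex g < 0 by rewrite /g ExB ?Ex_cst ?subr_lt0 //; exact: intg_cst.
have ev x : Eset f a x -> exists n0, forall m, (n0 <= m)%N -> Bset g m x.
  move=> [k Hk]; have [n _ H] := Hk 0%N; exists n.+1 => m nm.
  rewrite /Bset /=; apply: (lt_le_trans _ (@Mx_ub g m n.+1 x nm)).
  rewrite Sn_subc subr_gt0; apply: le_lt_trans H.
  by rewrite ler_pM2l ?ltr0n // ltW // qq_gt.
pose fn := fun m x => (g x * \1_(Bset g m) x)%:E.
have mfn m : measurable_fun setT (fn m).
  apply/measurable_EFinP; apply: measurable_funM => //.
  exact/measurable_indic/Bset_meas.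
have mEg : measurable_fun setT (EFin \o g) by apply/measurable_EFinP.
have aecv : {ae mu, forall x, setT x -> fn ^~ x @ \oo --> (EFin \o g) x}.
  exists (~` Eset f a); split.
  - exact: measurableC.
  - by rewrite probability_setC // E1 subee.
  - move=> x /= nP Ex; apply: nP => _.
    have [n0 Hn0] := ev x Ex; apply: cvg_near_cst.
    exists n0 => // m /= hm; rewrite /fn.
    by rewrite indicE mem_set ?mulr1 //; exact: Hn0.
have dom : {ae mu, forall x n, setT x -> (`|fn n x| <= (EFin \o (fun y => `|g y|%R)) x)%E}.
  apply: aeW => x n _ /=; rewrite lee_fin normrM indicE.
  by case: (_ \in _); rewrite ?normr1 ?normr0 ?mulr1 ?mulr0.
have [_ _ cv] := dominated_convergence measurableT mfn mEg aecv (intg_abs gi) dom.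
have ge0 n : (0 <= \int[mu]_(x in setT) fn n x)%E.
  have := garsia n gi; rewrite /Ex /Rintegral.
  have := integrable_fin_num measurableT (intg_ind gi (Bset_meas n mg)).
  by move=> /fineK <-; rewrite lee_fin.
have : (0 <= \int[mu]_(x in setT) (EFin \o g) x)%E.
  rewrite -(cvg_lim _ cv) //; apply: lime_ge; first exact: cvgP cv.
  by apply: nearW => n; exact: ge0.
move=> h; move: Eg; rewrite /Ex /Rintegral ltNge => /negP; apply.
exact: fine_ge0.
Qed.

Lemma upper f : intg f -> {ae mu, forall x, forall j k : nat, exists N,
  forall n, (N <= n)%N -> Sn f n.+1 x <= n.+1%:R * qq (qq (Ex f) j) k}.
Proof.
move=> fi; have mf := intg_meas fi.
apply: (@negligibleS _ _ _ _ (\bigcup_j Eset f (qq (Ex f) j))).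
  move=> x /= nP; move: nP; apply: contra_notP => hN.
  move=> j k; move: hN; apply: contra_notP => hne.
  exists j => //; exists k => N.
  move/forallNP: hne => /(_ N) /existsNP [n /not_implyP [nN /negP]].
  by rewrite -ltNge => H; exists n.
apply: negligible_bigcup => j; apply/negligibleP; first exact: Eset_meas.
by apply: Eset_null => //; exact: qq_gt.
Qed.

Lemma ExN f : intg f -> Ex (fun x => - f x) = - Ex f.
Proof.
move=> fi; have := ExB (intg_cst 0) fi; rewrite Ex_cst sub0r => <-.
by congr Ex; apply/funext => x; rewrite sub0r.
Qed.

Lemma SnN f n x : Sn (fun y => - f y) n x = - Sn f n x.
Proof. by rewrite /Sn sumrN. Qed.

Lemma birkhoff f : intg f ->
  {ae mu, forall x, (fun n => n%:R^-1 * Sn f n x) @ \oo --> Ex f}.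
Proof.
move=> fi; have U := upper fi; have L := upper (intgN fi).
apply: filterS2 U L => x Hu Hl; rewrite ExN // in Hl.
apply/cvgrPdist_le => e e0.
pose j := Num.Def.archi_bound (2 / e).
have hj : (j.+1%:R)^-1 <= e / 2.
  have h2 : 2 / e < j.+1%:R.
    apply: (lt_le_trans (archi_boundP _)); last by rewrite ler_nat.
    by rewrite divr_ge0 // ltW.
  rewrite -[leRHS]invf_div lef_pV2 ?posrE ?ltr0n ?divr_gt0 //.
  exact: ltW.
have [N1 H1] := Hu j j; have [N2 H2] := Hl j j.
exists (maxn N1 N2).+1 => // [[|n]] //=; rewrite ltnS geq_max => /andP[n1 n2].
have := H1 _ n1; have := H2 _ n2; rewrite SnN /qq.
set A := n.+1%:R^-1 * Sn f n.+1 x.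
have eS : Sn f n.+1 x = n.+1%:R * A by rewrite /A mulrA divff ?mul1r.
rewrite eS -mulrN !ler_pM2l ?ltr0n // => h2 h1.
move: hj; rewrite ler_pdivlMr // => hj.
clearbody A; move: (Ex f) (j.+1%:R^-1) hj h1 h2 => c dl hj h1 h2.
rewrite ler_norml; apply/andP; split; lra.
Qed.

End Birkhoff.
Section Avg.
Context (R : realType).
Lemma avg_tail (u : nat -> R) (c : R) (h : nat) :
  (fun n => n%:R^-1 * u n) @ \oo --> c ->
  (fun n => n%:R^-1 * (u n.+1 - u h.+1)) @ \oo --> c.
Proof.
move=> H.
have H1 : (fun n => n.+1%:R^-1 * u n.+1) @ \oo --> c.
  by move: H; rewrite -(cvg_shiftS (fun n => n%:R^-1 * u n)).
have H2 : (fun n => n.+2%:R^-1 * u n.+2) @ \oo --> c.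
  by move: H1; rewrite -(cvg_shiftS (fun n => n.+1%:R^-1 * u n.+1)).
rewrite -(cvg_shiftS (fun n => n%:R^-1 * (u n.+1 - u h.+1))).
have hh : (fun n => (harmonic n : R)) @ \oo --> 0 := cvg_harmonic.
have h3 : (fun n => (1 + (harmonic n : R)) * (n.+2%:R^-1 * u n.+2) - harmonic n * u h.+1)
   @ \oo --> ((1 + 0) * c - 0 * u h.+1).
  apply: cvgB; apply: cvgM => //; first (by apply: cvgD => //; exact: cvg_cst).
  exact: cvg_cst.
rewrite addr0 mul1r mul0r subr0 in h3.
apply: cvg_trans h3; apply: near_eq_cvg; apply: nearW => n /=.
rewrite /harmonic /=.
have e1 : (n.+1%:R : R) != 0 by rewrite pnatr_eq0.
have e2 : (n.+2%:R : R) != 0 by rewrite pnatr_eq0.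
rewrite (_ : n.+2%:R = n.+1%:R + 1 :> R); last by rewrite -natr1.
have e3 : (n.+1%:R + 1 : R) != 0 by rewrite natr1 pnatr_eq0.
have n0 : (0 : R) <= n%:R by exact: ler0n.
field; apply/andP; split; apply/negP => /eqP; lra.
Qed.
End Avg.
Section App.
Context (R : realType) (d : measure_display) (T : measurableType d) (P : probability T R) (X : int -> T -> R).
Hypothesis mX : forall t, measurable_fun setT (X t).

Definition Om := g_sigma_algebraType (@cylinders R).
Definition pathX (w : T) : Om := fun t => X t w.
Definition shiftO : Om -> Om := @Defs.shift R.

Lemma mpath : measurable_fun setT pathX.
Proof.
apply: (@measurability _ _ T Om setT pathX (@cylinders R)).
  by [].
move=> _ [C [t [A [mA ->]]] <-].
rewrite setTI.
have := mX t measurableT mA; rewrite setTI.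
by congr measurable.
Qed.

Lemma mshiftO : measurable_fun setT shiftO.
Proof.
apply: (@measurability _ _ Om Om setT shiftO (@cylinders R)); first by [].
move=> _ [C [t [A [mA ->]]] <-].
rewrite setTI; apply: sub_sigma_algebra.
exists (t + 1), A; split => //.
Qed.

Definition mp_mixin := isMeasurableFun.Build _ _ _ _ _ mpath.
Definition pathM : {mfun T >-> Om} := MeasurableFun.Pack (MeasurableFun.Class mp_mixin).
Definition muX : probability Om R := distribution P pathM.

Lemma ae_pull (Q : Om -> Prop) : {ae muX, forall x, Q x} -> {ae P, forall w, Q (pathX w)}.
Proof.
move=> [N [mN N0 sub]]; exists (pathX @^-1` N); split.
- by rewrite -[_ @^-1` _]setTI; apply: mpath.
- exact: N0.
- by move=> w /= nQ; apply: sub.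
Qed.

Lemma Ex_path (G : Om -> R) : measurable_fun setT G ->
  P.-integrable setT (EFin \o (G \o pathX)) ->
  intg muX G /\ Ex muX G = Rintegral P setT (G \o pathX).
Proof.
move=> mG iG.
have mEG : measurable_fun setT (EFin \o G) by apply/measurable_EFinP.
have iG' : P.-integrable (pathX @^-1` setT) ((EFin \o G) \o pathX) by rewrite preimage_setT.
split; first exact: (integrable_pushforward mpath mEG iG' measurableT).
rewrite /Ex /Rintegral /muX /distribution.
by rewrite (integral_pushforward mpath mEG iG' measurableT) preimage_setT.
Qed.

Hypothesis stat : strictly_stationary P X.
Lemma Sinv_mu B : measurable B -> muX (shiftO @^-1` B) = muX B.
Proof. by move=> mB; exact/esym/stat. Qed.

Hypothesis ergo : ergodic P X.
Lemma erg_mu B : measurable B -> shiftO @^-1` B = B -> muX B = 0%E \/ muX B = 1%E.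
Proof. by move=> mB; exact: ergo. Qed.

Lemma shift_inv (G : int -> Om -> R) : (forall t, G (t + 1) = G t \o shiftO) ->
  (forall t, intg muX (G t)) -> forall t, Ex muX (G t) = Ex muX (G 0).
Proof.
move=> GS Gi; elim/intZmod.int_ind => [//|n IH|n IH].
- by rewrite intS addrC GS (proj2 (@comp_intg _ _ _ muX shiftO mshiftO Sinv_mu _ (Gi n))).
- rewrite -IH.
  have e : G (intZmod.oppz n) = G (intZmod.oppz n.+1) \o shiftO.
    rewrite -GS; congr G.
    rewrite (_ : intZmod.oppz n.+1 = - (n.+1%:Z)) // (_ : intZmod.oppz n = - (n%:Z)) //.
    by rewrite intS opprD addrAC subrr add0r.
  by rewrite e (proj2 (@comp_intg _ _ _ muX shiftO mshiftO Sinv_mu _ (Gi _))).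
Qed.

Definition coord t (x : Om) := x t.
Lemma mcoord t : measurable_fun setT (coord t).
Proof.
move=> _ A mA; rewrite setTI; apply: sub_sigma_algebra.
by exists t, A; split.
Qed.

Definition G1 h t (x : Om) := x t * x (t - h%:Z).
Definition Zs t := [set x : Om | x t != 0].
Definition G2 h t (x : Om) := \1_(Zs t) x * \1_(Zs (t - h%:Z)) x : R.

Lemma G1S h t : G1 h (t + 1) = G1 h t \o shiftO.
Proof. by apply/funext => x; rewrite /G1 /= /shiftO /Defs.shift addrAC. Qed.

Lemma G2S h t : G2 h (t + 1) = G2 h t \o shiftO.
Proof.
apply/funext => x; rewrite /G2 /= !indicE /Zs /shiftO /Defs.shift.
by rewrite addrAC.
Qed.

Lemma mZs t : measurable (Zs t).
Proof.
apply: sub_sigma_algebra; exists t, (~` [set 0]); split.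
  by apply: measurableC; exact: measurable_set1.
by apply/seteqP; split => x /=; rewrite /Zs /= => /eqP.
Qed.

Lemma mG1 h t : measurable_fun setT (G1 h t).
Proof. by apply: measurable_funM; exact: mcoord. Qed.

Lemma mG2 h t : measurable_fun setT (G2 h t).
Proof. by apply: measurable_funM; apply: measurable_indic; exact: mZs. Qed.

Lemma iter_shiftO k (x : Om) t : iter k shiftO x t = x (t + k%:Z).
Proof.
elim: k t => [|k IH] t /=; first by rewrite addr0.
rewrite /shiftO /Defs.shift IH; congr x.
by rewrite intS addrA.
Qed.

Lemma SnG1 h n w : Sn shiftO (G1 h 0) n (pathX w) =
  \sum_(0 <= k < n) X k%:Z w * X (k%:Z - h%:Z) w.
Proof.
apply: eq_bigr => k _; rewrite /G1 !iter_shiftO add0r.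
by rewrite /pathX sub0r addrC.
Qed.

Lemma indZs t (y : Om) : \1_(Zs t) y = if y t != 0 then 1 else 0 :> R.
Proof.
rewrite indicE; case: ifPn => hy.
  by rewrite mem_set.
by rewrite memNset // /Zs /= => h; move/negP: hy.
Qed.

Lemma SnG2 h n w : Sn shiftO (G2 h 0) n (pathX w) =
  \sum_(0 <= k < n) ind_nz X k%:Z w * ind_nz X (k%:Z - h%:Z) w.
Proof.
apply: eq_bigr => k _; rewrite /G2 !indZs !iter_shiftO add0r.
by rewrite /pathX /ind_nz sub0r addrC.
Qed.

Lemma tail_sum (F : nat -> R) n h : (h <= n)%N ->
  \sum_(h.+1 <= t < n.+1) F t = \sum_(0 <= t < n.+1) F t - \sum_(0 <= t < h.+1) F t.
Proof.
move=> hn; rewrite [in X in _ = X - _](big_cat_nat _ (m := 0) (n := h.+1) (p := n.+1)) //=.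
by rewrite addrC addrK.
Qed.

Lemma gamma0_cvg h w (c : R) :
  (fun n => n%:R^-1 * Sn shiftO (G1 h 0) n (pathX w)) @ \oo --> c ->
  (fun n => gamma0_hat X n h w) @ \oo --> c.
Proof.
move=> H; have := avg_tail h H; apply: cvg_trans; apply: near_eq_cvg.
exists h => // n /= hn; rewrite /gamma0_hat !SnG1 tail_sum //.
Qed.

Lemma gammaa_cvg h w (c : R) :
  (fun n => n%:R^-1 * Sn shiftO (G2 h 0) n (pathX w)) @ \oo --> c ->
  (fun n => gammaa_hat X n h w) @ \oo --> c.
Proof.
move=> H; have := avg_tail h H; apply: cvg_trans; apply: near_eq_cvg.
exists h => // n /= hn; rewrite /gammaa_hat !SnG2 tail_sum //.
Qed.

Hypothesis sq : forall t, P.-integrable setT (fun w => (X t w ^+ 2)%:E).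

Lemma intG1 h t : intg muX (G1 h t).
Proof.
have [] // := Ex_path (mG1 h t).
apply: (@intg_le _ _ _ P _ (fun w => X t w ^+ 2 + X (t - h%:Z) w ^+ 2)).
- by apply: measurable_funM; exact: mX.
- exact: (intgD (sq t) (sq _)).
- move=> w /=; rewrite /G1 /pathX normrM.
  set a := X t w; set b := X (t - h%:Z) w.
  have ha : `|a| ^+ 2 = a ^+ 2 by rewrite real_normK // num_real.
  have hb : `|b| ^+ 2 = b ^+ 2 by rewrite real_normK // num_real.
  rewrite -ha -hb; have := normr_ge0 a; have := normr_ge0 b.
  move: `|a| `|b| => p q p0 q0; nra.
Qed.

Lemma intG2 h t : intg muX (G2 h t).
Proof.
have [] // := Ex_path (mG2 h t).
apply: (@intg_le _ _ _ P _ (fun w => 1)).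
- apply: measurable_funM; apply: measurable_indic;
  by rewrite -[X in measurable X]setTI; apply: mpath => //; exact: mZs.
- exact: intg_cst.
- move=> w /=; rewrite /G2 normrM !indicE.
  by case: (_ \in _); case: (_ \in _); rewrite ?normr1 ?normr0 ?mulr1 ?mulr0.
Qed.

End App.
Lemma ae_forall_nat d (Om : measurableType d) (R : realType) (mu : probability Om R)
  (Q : nat -> Om -> Prop) :
  (forall h, {ae mu, forall x, Q h x}) -> {ae mu, forall x, forall h, Q h x}.
Proof.
move=> H; pose N h := sval (cid (H h)).
apply: (@negligibleS _ _ _ _ (\bigcup_h N h)).
  move=> x /= nQ; apply: contra_notP nQ => nN h.
  apply: contra_notP nN => nQh; exists h => //.
  rewrite /N; case: cid => /= A [_ _]; apply; exact: nQh.
apply: negligible_bigcup => h; rewrite /N; case: cid => /= A [mA A0 _].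
exact/negligibleP.
Qed.

Section Fin.
Context (R : realType) (d : measure_display) (T : measurableType d) (P : probability T R)
  (sigma : R) (eps : int -> T -> R).
Hypothesis sig0 : 0 < sigma.
Hypothesis meps : forall t, measurable_fun setT (eps t).
Definition rr t w := sigma * eps t w.
Lemma mrr t : measurable_fun setT (rr t).
Proof. by apply: measurable_funM => //; exact: measurable_cst. Qed.
Definition aa := ind_nz rr.

Lemma eps_rr t w : eps t w = sigma^-1 * rr t w.
Proof. by rewrite /rr mulKf // gt_eqF. Qed.

Lemma aa_G2 h t w : aa t w * aa (t - h%:Z) w = G2 h t (pathX rr w).
Proof. by rewrite /G2 !indZs. Qed.

Lemma aa0 t w : aa t w != 1 -> eps t w = 0.
Proof.
rewrite /aa /ind_nz; case: ifPn => [_|]; first by rewrite eqxx.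
rewrite negbK /rr mulf_eq0 (gt_eqF sig0) /= => /eqP -> //.
Qed.

Lemma aa01 t w : aa t w = 0 \/ aa t w = 1.
Proof. by rewrite /aa /ind_nz; case: ifPn; [right|left]. Qed.

Lemma A_meas h t : measurable [set w | aa t w * aa (t - h%:Z) w = 1].
Proof.
have mf : measurable_fun setT (G2 h t \o pathX rr).
  exact: measurableT_comp (mG2 h t) (mpath mrr).
have := mf measurableT [set 1] (measurable_set1 1); rewrite setTI.
congr measurable; apply/seteqP; split => w /=; by rewrite aa_G2.
Qed.

Lemma Rint_aa h t : Rintegral P setT (fun w => aa t w * aa (t - h%:Z) w) =
  fine (P [set w | aa t w * aa (t - h%:Z) w = 1]).
Proof.
rewrite (eq_Rintegral _ (g := \1_[set w | aa t w * aa (t - h%:Z) w = 1])).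
  by rewrite /Rintegral integral_indic // ?setIT //; exact: A_meas.
move=> w _; rewrite indicE.
case: (aa01 t w) => e1; case: (aa01 (t - h%:Z) w) => e2.
- by rewrite memNset /= e1 e2 ?mulr0 // => /eqP; rewrite eq_sym oner_eq0.
- by rewrite memNset /= e1 e2 ?mul0r // => /eqP; rewrite eq_sym oner_eq0.
- by rewrite memNset /= e1 e2 ?mulr0 // => /eqP; rewrite eq_sym oner_eq0.
- by rewrite mem_set /= e1 e2 ?mulr1.
Qed.

Lemma RintA h t (f : T -> R) :
  (forall w, aa t w * aa (t - h%:Z) w != 1 -> f w = 0) ->
  Rintegral P [set w | aa t w * aa (t - h%:Z) w = 1] f = Rintegral P setT f.
Proof.
move=> fz; rewrite Rintegral_mkcond; apply: eq_Rintegral => w _.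
rewrite patchE; case: ifPn => // wA; rewrite fz //; apply/eqP => h1.
by move/negP: wA; apply; exact/mem_set.
Qed.

Lemma eps_off h t w : aa t w * aa (t - h%:Z) w != 1 -> eps t w * eps (t - h%:Z) w = 0.
Proof.
case: (aa01 t w) => e1; last first.
  by rewrite e1 mul1r => /aa0 ->; rewrite mulr0.
by move=> _; rewrite aa0 ?mul0r // e1 eq_sym oner_eq0.
Qed.

Hypothesis sqi : forall t, P.-integrable setT (fun w => (rr t w ^+ 2)%:E).

Lemma intRR t s : intg P (fun w => rr t w * rr s w).
Proof.
apply: (@intg_le _ _ _ P _ (fun w => rr t w ^+ 2 + rr s w ^+ 2)).
- by apply: measurable_funM; exact: mrr.
- exact: (intgD (sqi t) (sqi _)).
- move=> w /=; rewrite normrM.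
  set a := rr t w; set b := rr s w.
  have ha : `|a| ^+ 2 = a ^+ 2 by rewrite real_normK // num_real.
  have hb : `|b| ^+ 2 = b ^+ 2 by rewrite real_normK // num_real.
  rewrite -ha -hb; have := normr_ge0 a; have := normr_ge0 b.
  move: `|a| `|b| => p q p0 q0; nra.
Qed.

Lemma Rint_eps t s : Rintegral P setT (fun w => eps t w * eps s w) =
  sigma^-1 ^+ 2 * Rintegral P setT (fun w => rr t w * rr s w).
Proof.
rewrite -RintegralZl //; last exact: intRR.
by apply: eq_Rintegral => w _; rewrite !eps_rr expr2 mulrACA.
Qed.

Lemma intAA h t : intg P (fun w => aa t w * aa (t - h%:Z) w).
Proof.
apply: (@intg_le _ _ _ P _ (fun w => 1)).
- rewrite (_ : (fun w => _) = G2 h t \o pathX rr); last by apply/funext => w; rewrite aa_G2.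
  exact: measurableT_comp (mG2 h t) (mpath mrr).
- exact: intg_cst.
- move=> w; case: (aa01 t w) => ->; case: (aa01 (t - h%:Z) w) => ->;
  by rewrite ?mulr0 ?mul0r ?mulr1 ?normr0 ?normr1.
Qed.

Lemma P_fine_gt0 (A : set T) : measurable A -> (0 < P A)%E -> 0 < fine (P A).
Proof.
move=> mA PA; apply: fine_gt0; rewrite PA /=.
exact: le_lt_trans (probability_le1 P mA) (ltry 1).
Qed.

End Fin.

Lemma condE (R : realType) (d : measure_display) (T : measurableType d)
  (P : probability T R) (f : T -> R) (A : set T) :
  cond_exp P f A = Rintegral P A f / fine (P A).
Proof. by []. Qed.

Theorem proposition1 (R : realType) (d : measure_display) (T : measurableType d)
  (P : probability T R) (m : nat) (sigma : R) (eps : int -> T -> R) :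
  (1 <= m)%N ->
  0 < sigma ->
  (forall t, measurable_fun setT (eps t)) ->
  let r := fun t w => sigma * eps t w in
  let a := ind_nz r in
  (forall t, cond_exp P (eps t) [set w | a t w = 1] = 0) ->
  (forall t, cond_exp P (fun w => eps t w ^+ 2) [set w | a t w = 1] = 1) ->
  (forall t (h : nat), (h <= m)%N ->
     (0%E < P [set w | (a t w * a (t - h%:Z) w = 1)%R])%E) ->
  strictly_stationary P r ->
  ergodic P r ->
  (forall t, P.-integrable setT (fun w => (r t w ^+ 2)%:E)) ->
  (forall t, (\int[P]_w (r t w)%:E = 0)%E) ->
  forall t0 : int,
  {ae P, forall w, forall h : nat, (1 <= h <= m)%N ->
     (fun n => rhopr_hat r n h w) @ \oo -->
       cond_exp P (fun w => eps t0 w * eps (t0 - h%:Z) w)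
                  [set w | a t0 w * a (t0 - h%:Z) w = 1]}.
Proof.
move=> m1 sig0 meps r a Hc1 Hc2 Hpos stat erg sqi mean0 t0.
have mr : forall t, measurable_fun setT (rr sigma eps t) := mrr sigma meps.
pose mu := muX P mr.
have B1 h := @birkhoff _ _ _ mu (@shiftO R) (@mshiftO R) (Sinv_mu mr stat) (erg_mu mr erg) _
  (intG1 mr sqi h 0).
have B2 h := @birkhoff _ _ _ mu (@shiftO R) (@mshiftO R) (Sinv_mu mr stat) (erg_mu mr erg) _
  (intG2 P mr h 0).
have := @ae_forall_nat _ _ _ mu (fun h x =>
   ((fun n => n%:R^-1 * Sn (@shiftO R) (G1 h 0) n x) @ \oo --> Ex mu (G1 h 0)) /\
   ((fun n => n%:R^-1 * Sn (@shiftO R) (G2 h 0) n x) @ \oo --> Ex mu (G2 h 0)))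
  (fun h => filterS2 (ae_filter_ringOfSetsType mu) (fun x a b => conj a b) (B1 h) (B2 h)).
move=> /ae_pull; apply: filterS => w Hw h /andP[h1 hm].
have c1h := gamma0_cvg (proj1 (Hw h)).
have c10 := gamma0_cvg (proj1 (Hw 0%N)).
have ca0 := gammaa_cvg (proj2 (Hw 0%N)).
have cah := gammaa_cvg (proj2 (Hw h)).
have EG1 k t : Ex mu (G1 k t) = Rintegral P setT (fun w => rr sigma eps t w * rr sigma eps (t - k%:Z) w).
  exact: (Ex_path mr (mG1 k t) (intRR meps sqi t (t - k%:Z))).2.
have EG2 k t : Ex mu (G2 k t) = fine (P [set w | a t w * a (t - k%:Z) w = 1]).
  have e : (G2 k t \o pathX (rr sigma eps)) = (fun w => aa sigma eps t w * aa sigma eps (t - k%:Z) w).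
    by apply/funext => w'; rewrite /= aa_G2.
  have := @Ex_path _ _ _ P _ mr (G2 k t) (mG2 k t); rewrite e => /(_ (@intAA _ _ _ P sigma eps meps k t)) [_ ->].
  exact: Rint_aa.
have I1 t := shift_inv stat (@G1S R h) (intG1 mr sqi h) t.
have I2 t := shift_inv stat (@G2S R h) (intG2 P mr h) t.
have aE : a = aa sigma eps := erefl.
rewrite aE in EG2 Hc2 Hpos *.
have A0e : [set w | aa sigma eps 0 w = 1] =
    [set w | aa sigma eps 0 w * aa sigma eps (0 - 0%:Z) w = 1].
  apply/seteqP; split => w' /=; rewrite subr0;
  by case: (aa01 sigma eps 0 w') => ->; rewrite ?mul0r ?mulr1.
have Hp0 := Hc2 0; rewrite condE A0e in Hp0.
rewrite (@RintA _ _ _ P sigma eps 0%N 0 (fun w => eps 0 w ^+ 2)) in Hp0; last first.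
  by move=> w' /(eps_off sig0); rewrite subr0 expr2.
set A0 := [set w | aa sigma eps 0 w * aa sigma eps (0 - 0%:Z) w = 1] in Hp0.
have p0pos : 0 < fine (P A0).
  exact: P_fine_gt0 (@A_meas _ _ _ sigma eps meps 0%N 0) (Hpos 0 0%N (leq0n m)).
have Eq0 : Rintegral P setT (fun w => eps 0 w ^+ 2) = fine (P A0).
  by rewrite -[RHS]mul1r -Hp0 divfK // gt_eqF.
have E10v : Ex mu (G1 0 0) = sigma ^+ 2 * Ex mu (G2 0 0).
  rewrite EG1 EG2 -/A0 -Eq0.
  rewrite (_ : (fun w => eps 0 w ^+ 2) = (fun w => eps 0 w * eps (0 - 0%:Z) w)); last first.
    by apply/funext => w'; rewrite subr0 expr2.
  rewrite (Rint_eps sig0 meps sqi) mulrA -exprMn divff ?gt_eqF // expr1n mul1r.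
  by [].
have E20ne : Ex mu (G2 0 0) != 0 by rewrite EG2 -/A0 gt_eqF.
have E2hne : Ex mu (G2 h 0) != 0.
  rewrite EG2 gt_eqF //.
  exact: P_fine_gt0 (@A_meas _ _ _ sigma eps meps h 0) (Hpos 0 h hm).
have E10ne : Ex mu (G1 0 0) != 0.
  by rewrite E10v mulf_neq0 // expf_neq0 // gt_eqF.
rewrite condE (@RintA _ _ _ P sigma eps h t0); last exact: eps_off.
rewrite (Rint_eps sig0 meps sqi) -EG1 -EG2 I1 I2.
have -> : sigma^-1 ^+ 2 * Ex mu (G1 h 0) / Ex mu (G2 h 0) =
  Ex mu (G1 h 0) / Ex mu (G1 0 0) * Ex mu (G2 0 0) / Ex mu (G2 h 0).
  rewrite E10v; have s0 : sigma != 0 by rewrite gt_eqF.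
  by field; rewrite s0 E20ne E2hne.
rewrite /rhopr_hat /rho0_hat.
apply: cvgM; last exact: cvgV.
apply: cvgM => //; apply: cvgM => //; exact: cvgV.
Qed.
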